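(* Let $F:\mathbb{R}^d\to\mathbb{R}^d$ be $L$-Lipschitz, $G:\mathbb{R}^d\rightrightarrows\mathbb{R}^d$ maximally monotone, the solution set of $0\in F(x)+G(x)$ nonempty, and let $x^\star$ be a solution with $\langle u,x-x^\star\rangle\ge-\rho\|u\|^2$ for all $(x,u)$ in the graph of $F+G$, where $0<\rho<\eta$. Let $\alpha=1-\frac\rho\eta$, $\alpha_k=\frac{\alpha}{\sqrt{k+2}\log(k+3)}$, and let $(x_k)$ be random iterates with $x_{k+1}=(1-\alpha_k)x_k+\alpha_k\widetilde J_{\eta(F+G)}(x_k)$, where the random points $\widetilde J_{\eta(F+G)}(x_k)$ satisfy $\mathbb{E}_k\|\widetilde J_{\eta(F+G)}(x_k)-J_{\eta(F+G)}(x_k)\|^2\le\varepsilon_{k,v}^2$ and $\|\mathbb{E}_k[\widetilde J_{\eta(F+G)}(x_k)]-J_{\eta(F+G)}(x_k)\|\le\varepsilon_{k,b}$. Then $$\frac\alpha4\sum_{k=0}^{K-1}\alpha_k\mathbb{E}\|(\mathrm{Id}-J_{\eta(F+G)})(x_k)\|^2\le\frac12\|x_0-x^\star\|^2+\frac32\sum_{k=0}^{K-1}\alpha_k^2\mathbb{E}[\varepsilon_{k,v}^2]+\sum_{k=0}^{K-1}\alpha_k\mathbb{E}\big[\|x_k-x^\star\|\varepsilon_{k,b}\big].$$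
   Context: For an operator $A$, $J_A=(\mathrm{Id}+A)^{-1}$. $\mathbb{E}_k$ denotes expectation conditioned on the randomness of $x_1,\dots,x_k$; $\varepsilon_{k,v},\varepsilon_{k,b}$ may be random quantities measurable with respect to that conditioning. *)

(* Defs.v *)
From HB Require Import structures.
From mathcomp Require Import all_boot all_order all_algebra.
From mathcomp Require Import all_classical all_reals all_analysis.
Set Implicit Arguments. Unset Strict Implicit. Unset Printing Implicit Defensive.
Import Order.TTheory GRing.Theory Num.Theory.
Local Open Scope classical_set_scope.
Local Open Scope ring_scope.

Definition dotv {R : realType} {d : nat} (u v : 'rV[R]_d) : R :=
  \sum_(i < d) u 0 i * v 0 i.
Definition normv {R : realType} {d : nat} (u : 'rV[R]_d) : R :=
  Num.sqrt (dotv u u).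

Definition lipschitz_with {R : realType} {d : nat} (L : R)
  (F : 'rV[R]_d -> 'rV[R]_d) : Prop :=
  forall x y, normv (F x - F y) <= L * normv (x - y).

Definition setop (R : realType) (d : nat) := 'rV[R]_d -> set 'rV[R]_d.

Definition monotone_op {R : realType} {d : nat} (G : setop R d) : Prop :=
  forall x y u v, G x u -> G y v -> 0 <= dotv (u - v) (x - y).

Definition maximally_monotone {R : realType} {d : nat} (G : setop R d) : Prop :=
  monotone_op G /\
  forall G' : setop R d, monotone_op G' ->
    (forall x u, G x u -> G' x u) -> forall x u, G' x u -> G x u.

Definition add_op {R : realType} {d : nat} (F : 'rV[R]_d -> 'rV[R]_d)
  (G : setop R d) : setop R d :=
  fun x => [set F x + u | u in G x].

(* y is a value of the resolvent J_{eta A} = (Id + eta A)^{-1} at x,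
   i.e. x \in y + eta A(y) *)
Definition resolvent_at {R : realType} {d : nat} (eta : R) (A : setop R d)
  (x y : 'rV[R]_d) : Prop :=
  exists u, A y u /\ x = y + eta *: u.

(* sigma-algebra on Omega generated by the random vectors x_0, ..., x_k
   (R^d carries the Borel sigma-algebra = product of the coordinate ones) *)
Definition gen_sets {R : realType} {d : nat} {T : Type}
  (x : nat -> T -> 'rV[R]_d) (k : nat) : set_system T :=
  [set A | exists i j (B : set R),
      (i <= k)%N /\ measurable B /\ A = (fun w => x i w 0 j) @^-1` B].

Definition past_sigma {R : realType} {d : nat} {T : Type}
  (x : nat -> T -> 'rV[R]_d) (k : nat) : set_system T :=
  <<s gen_sets x k >>.

Definition sub_measurable {R : realType} {T : Type} (Fk : set_system T)
  (Z : T -> R) : Prop :=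
  forall B : set R, measurable B -> Fk (Z @^-1` B).

Definition is_cond_exp {R : realType} {dd : measure_display}
  {T : measurableType dd} (P : probability T R) (Fk : set_system T)
  (Y Z : T -> R) : Prop :=
  sub_measurable Fk Z /\
  forall A, Fk A ->
    (\int[P]_(w in A) (Z w)%:E = \int[P]_(w in A) (Y w)%:E)%E.

(* Main.v *)
Require Import Defs.
From HB Require Import structures.
From mathcomp Require Import all_boot all_order all_algebra.
From mathcomp Require Import all_classical all_reals all_analysis.
From mathcomp Require Import ring lra.
From mathcomp Require Import measurable_realfun.
Import Order.TTheory GRing.Theory Num.Theory.
Local Open Scope classical_set_scope.
Local Open Scope ring_scope.


Lemma dotvC {R : realType} {d : nat} (u v : 'rV[R]_d) : dotv u v = dotv v u.
Proof. by apply: eq_bigr => i _; rewrite mulrC. Qed.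

Lemma dotvDl {R : realType} {d : nat} (u v w : 'rV[R]_d) :
  dotv (u + v) w = dotv u w + dotv v w.
Proof. by rewrite /dotv -big_split; apply: eq_bigr => i _; rewrite mxE mulrDl. Qed.

Lemma dotvNl {R : realType} {d : nat} (u w : 'rV[R]_d) : dotv (- u) w = - dotv u w.
Proof. by rewrite /dotv -sumrN; apply: eq_bigr => i _; rewrite mxE mulNr. Qed.

Lemma dotvZl {R : realType} {d : nat} a (u w : 'rV[R]_d) : dotv (a *: u) w = a * dotv u w.
Proof. by rewrite /dotv mulr_sumr; apply: eq_bigr => i _; rewrite mxE mulrA. Qed.

Lemma dotvBl {R : realType} {d : nat} (u v w : 'rV[R]_d) :
  dotv (u - v) w = dotv u w - dotv v w.
Proof. by rewrite dotvDl dotvNl. Qed.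

Lemma dotvDr {R : realType} {d : nat} (u v w : 'rV[R]_d) :
  dotv w (u + v) = dotv w u + dotv w v.
Proof. by rewrite dotvC dotvDl !(dotvC w). Qed.

Lemma dotvNr {R : realType} {d : nat} (u w : 'rV[R]_d) : dotv w (- u) = - dotv w u.
Proof. by rewrite dotvC dotvNl dotvC. Qed.

Lemma dotvZr {R : realType} {d : nat} a (u w : 'rV[R]_d) : dotv w (a *: u) = a * dotv w u.
Proof. by rewrite dotvC dotvZl dotvC. Qed.

Lemma dotvBr {R : realType} {d : nat} (u v w : 'rV[R]_d) :
  dotv w (u - v) = dotv w u - dotv w v.
Proof. by rewrite dotvDr dotvNr. Qed.

Lemma dotv_ge0 {R : realType} {d : nat} (u : 'rV[R]_d) : 0 <= dotv u u.
Proof. by apply: sumr_ge0 => i _; rewrite -expr2 sqr_ge0. Qed.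

Lemma normv_ge0 {R : realType} {d : nat} (u : 'rV[R]_d) : 0 <= normv u.
Proof. exact: sqrtr_ge0. Qed.

Lemma normv2 {R : realType} {d : nat} (u : 'rV[R]_d) : normv u ^+ 2 = dotv u u.
Proof. by rewrite /normv sqr_sqrtr // dotv_ge0. Qed.

Lemma coord_sq {R : realType} {d : nat} (u : 'rV[R]_d) j : u 0 j ^+ 2 <= dotv u u.
Proof.
rewrite /dotv (bigD1 j) //= expr2 lerDl; apply: sumr_ge0 => i _.
by rewrite -expr2 sqr_ge0.
Qed.

Lemma coord_le {R : realType} {d : nat} (u : 'rV[R]_d) j : `|u 0 j| <= normv u.
Proof.
rewrite -(sqrtr_sqr (u 0 j)) /normv ler_sqrt ?dotv_ge0 //; exact: coord_sq.
Qed.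

Lemma dotv_sq_expand {R : realType} {d : nat} (t : R) (u v : 'rV[R]_d) :
  dotv (t *: u - v) (t *: u - v) = t ^+ 2 * dotv u u - 2 * t * dotv u v + dotv v v.
Proof.
rewrite !dotvBl !dotvBr !dotvZl !dotvZr (dotvC v u); ring.
Qed.

Lemma CS2 {R : realType} {d : nat} (u v : 'rV[R]_d) :
  dotv u v ^+ 2 <= dotv u u * dotv v v.
Proof.
have H t := dotv_sq_expand t u v.
have H0 t : 0 <= t ^+ 2 * dotv u u - 2 * t * dotv u v + dotv v v.
  by rewrite -H dotv_ge0.
have a0 := dotv_ge0 u; have b0 := dotv_ge0 v.
set a := dotv u u in H0 a0 *; set b := dotv v v in H0 b0 *; set c := dotv u v in H0 *.
have [az|anz] := eqVneq a 0.
  have [cz|cnz] := eqVneq c 0; first by rewrite cz az expr0n /= mul0r.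
  have := H0 ((b + 1) / (2 * c)); rewrite az mulr0 add0r.
  have -> : 2 * ((b + 1) / (2 * c)) * c = b + 1.
    by field; rewrite cnz.
  lra.
have ap : 0 < a by rewrite lt_neqAle eq_sym anz a0.
have := H0 (c / a).
have e1 : (c / a) ^+ 2 * a = c ^+ 2 / a by field.
have e2 : 2 * (c / a) * c = 2 * (c ^+ 2 / a) by field.
rewrite e1 e2 => h.
have h2 : c ^+ 2 / a <= b by lra.
by rewrite -ler_pdivrMl // mulrC.
Qed.

Lemma CS {R : realType} {d : nat} (u v : 'rV[R]_d) : dotv u v <= normv u * normv v.
Proof.
rewrite /normv -sqrtrM ?dotv_ge0 //.
apply: (le_trans (ler_norm _)).
by rewrite -(sqrtr_sqr (dotv u v)) ler_sqrt ?CS2 // mulr_ge0 // dotv_ge0.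
Qed.


Lemma minty_res {R : realType} {d : nat} (F : 'rV[R]_d -> 'rV[R]_d) (G : setop R d)
  (eta rho : R) (xstar z y : 'rV[R]_d) : 0 < eta ->
  resolvent_at eta (add_op F G) z y ->
  (forall z u, add_op F G z u -> dotv u (z - xstar) >= - rho * dotv u u) ->
  (1 - rho / eta) * dotv (z - y) (z - y) <= dotv (z - y) (z - xstar).
Proof.
move=> e0 [u [Hu Hz]] Hm.
have H := Hm _ _ Hu.
have E1 : z - y = eta *: u by rewrite Hz addrAC subrr add0r.
have E2 : z - xstar = eta *: u + (y - xstar) by rewrite Hz (addrC y) -addrA.
rewrite E2 E1 dotvDr !dotvZl !dotvZr.
have q : rho / eta * eta = rho by rewrite divfK // (gt_eqF e0).
have a0 := dotv_ge0 u.
set A := dotv u u in H a0 *; set B := dotv u (y - xstar) in H *.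
set qq := rho / eta in q *.
have h1 : 0 <= eta * (B + rho * A).
  apply: mulr_ge0; first exact: ltW.
  lra.
have h2 : qq * (eta * (eta * A)) = rho * eta * A by rewrite mulrA q mulrA.
nra.
Qed.

Lemma step_pt {R : realType} {d : nat} (Dk r e : 'rV[R]_d) (a al : R) :
  0 < a -> a <= al -> al * dotv r r <= dotv r Dk ->
  2^-1 * dotv (Dk - a *: (r - e)) (Dk - a *: (r - e)) + al / 4 * a * dotv r r
  <= 2^-1 * dotv Dk Dk + 3 / 2 * a ^+ 2 * dotv e e + a * dotv e Dk.
Proof.
move=> a0 aal Hm.
have Hq : 0 <= dotv (r + 2 *: e) (r + 2 *: e) by exact: dotv_ge0.
rewrite !dotvDl !dotvDr !dotvZl !dotvZr in Hq.
rewrite !dotvBl !dotvBr !dotvZl !dotvZr !dotvBl !dotvBr.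
rewrite (dotvC e r) (dotvC Dk r) (dotvC Dk e) in Hq Hm *.
have r0 := dotv_ge0 r.
set RR := dotv r r in Hq Hm r0 *; set RE := dotv r e in Hq *.
set EE := dotv e e in Hq *; set RD := dotv r Dk in Hm *; set ED := dotv e Dk.
set DD := dotv Dk Dk.
have h1 : a * (al * RR) <= a * RD by rewrite ler_pM2l.
have h2 : 0 <= a ^+ 2 * (RR + 2 * RE + (2 * RE + 2 * (2 * EE))).
  by rewrite mulr_ge0 // sqr_ge0.
have h3 : 0 <= a * RR * (al - a).
  by apply: mulr_ge0; [apply: mulr_ge0; [exact: ltW|exact: r0] | rewrite subr_ge0].
nra.
Qed.

Lemma dot_abs_le {R : realType} {d : nat} (e D : 'rV[R]_d) :
  `|dotv e D| <= 2^-1 * (dotv e e + dotv D D).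
Proof.
have h1 : 0 <= dotv (e - D) (e - D) by exact: dotv_ge0.
have h2 : 0 <= dotv (e + D) (e + D) by exact: dotv_ge0.
rewrite ?dotvDl ?dotvDr ?dotvNl ?dotvNr (dotvC D e) in h1 h2.
rewrite ler_norml; apply/andP; split; lra.
Qed.

Lemma step_bound {R : realType} {d : nat} (Dk r e : 'rV[R]_d) (a al : R) :
  0 < a -> a <= al -> al * dotv r r <= dotv r Dk ->
  dotv (Dk - a *: (r - e)) (Dk - a *: (r - e))
  <= (1 + a) * dotv Dk Dk + (3 * a ^+ 2 + a) * dotv e e.
Proof.
move=> a0 aal Hm.
have := step_pt Dk r e a al a0 aal Hm.
have := dot_abs_le e Dk.
rewrite ler_norml => /andP[_ h].
have r0 := dotv_ge0 r.
have al0 : 0 <= al / 4 * a * dotv r r.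
  have al0 : 0 <= al by exact: (le_trans (ltW a0) aal).
  apply: mulr_ge0 => //; apply: mulr_ge0; [apply: divr_ge0 => // | exact: ltW].
have h' : a * dotv e Dk <= a * (2^-1 * (dotv e e + dotv Dk Dk)) by rewrite ler_pM2l.
nra.
Qed.

Lemma ln_ge1B {R : realType} (y : R) : 0 < y -> 1 - y^-1 <= ln y.
Proof.
move=> y0.
have := expR_ge1Dx (- ln y).
rewrite expRN lnK ?posrE //.
lra.
Qed.

Lemma ak_bounds {R : realType} (al : R) (k : nat) : 0 < al ->
  0 < al / (Num.sqrt (k%:R + 2) * ln (k%:R + 3)) /\
  al / (Num.sqrt (k%:R + 2) * ln (k%:R + 3)) <= al.
Proof.
move=> al0.
have k0 : (0 : R) <= k%:R by [].
have l3 : 5 / 6 <= ln (3 : R).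
  have -> : (3 : R) = 3 / 2 * 2 by field.
  rewrite lnM ?posrE //.
  have h1 := @ln_ge1B R (3/2) ltac:(lra).
  have h2 := @ln_ge1B R 2 ltac:(lra).
  lra.
have lk : ln (3 : R) <= ln (k%:R + 3).
  by rewrite ler_ln ?posrE; lra.
have s2 : 6 / 5 <= Num.sqrt (2 : R).
  rewrite -(@ger0_norm _ (6/5)); last lra.
  rewrite -sqrtr_sqr ler_sqrt; lra.
have sk : Num.sqrt (2 : R) <= Num.sqrt (k%:R + 2) by rewrite ler_sqrt; lra.
have P1 : 1 <= Num.sqrt (k%:R + 2 : R) * ln (k%:R + 3 : R).
  set sq := Num.sqrt (k%:R + 2) in sk *; set lg := ln (k%:R + 3) in lk *.
  have : 0 <= (sq - 6/5) * (lg - 5/6) by apply: mulr_ge0; lra.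
  nra.
split.
  by apply: divr_gt0 => //; lra.
rewrite ler_pdivrMr; last lra.
rewrite -{1}(mulr1 al) ler_pM2l //.
Qed.


Lemma sub_meas_meas {d} {T : measurableType d} {R : realType} {Fk : set_system T}
  {Z : T -> R} : Fk `<=` measurable -> sub_measurable Fk Z -> measurable_fun setT Z.
Proof. by move=> sF hZ _ B mB; rewrite setTI; exact: sF (hZ B mB). Qed.

Lemma sub_meas_comp {T : Type} {R : realType} {Fk : set_system T}
  {f : T -> R} {g : R -> R} :
  sub_measurable Fk f -> measurable_fun setT g -> sub_measurable Fk (g \o f).
Proof.
move=> hf mg B mB; have := mg measurableT B mB; rewrite setTI => h.
exact: hf _ h.
Qed.

Lemma ae_le_integrable {d} {T : measurableType d} {R : realType}
  {mu : {measure set T -> \bar R}} (f g : T -> R) :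
  measurable_fun setT f -> mu.-integrable setT (EFin \o g) ->
  {ae mu, forall w, `|f w| <= g w} -> mu.-integrable setT (EFin \o f).
Proof.
move=> mf ig hae; apply/integrableP; split; first exact/measurable_EFinP.
case/integrableP: ig => mg ltg.
apply: le_lt_trans ltg.
apply: ae_ge0_le_integral => //.
- have mf' : measurable_fun [set: T] (EFin \o f) by exact/measurable_EFinP.
  exact: measurableT_comp.
- exact: measurableT_comp.
- apply: filterS hae => w h _ /=; rewrite lee_fin.
  exact: le_trans h (ler_norm _).
Qed.

Lemma ae_ge0_integrable {d} {T : measurableType d} {R : realType}
  {mu : {measure set T -> \bar R}} (g : T -> R) :
  measurable_fun setT g -> {ae mu, forall w, 0 <= g w} ->
  (\int[mu]_w (g w)%:E < +oo)%E -> mu.-integrable setT (EFin \o g).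
Proof.
move=> mg h0 hlt; apply/integrableP; split; first exact/measurable_EFinP.
rewrite (ae_eq_integral (fun w => (g w)%:E)) //.
- have mg' : measurable_fun [set: T] (EFin \o g) by exact/measurable_EFinP.
  exact: measurableT_comp.
- exact/measurable_EFinP.
- apply: filterS h0 => w h _ /=; by rewrite ger0_norm.
Qed.

Lemma ae_ge0_integral_ge0 {d} {T : measurableType d} {R : realType}
  {mu : {measure set T -> \bar R}} (g : T -> R) :
  measurable_fun setT g -> {ae mu, forall w, 0 <= g w} ->
  (0 <= \int[mu]_w (g w)%:E)%E.
Proof.
move=> mg h0.
rewrite (ae_eq_integral (fun w => `|(g w)%:E|)%E) //.
- by apply: integral_ge0 => w _; exact: abse_ge0.
- exact/measurable_EFinP.
- have mg' : measurable_fun [set: T] (EFin \o g) by exact/measurable_EFinP.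
  exact: measurableT_comp.
- apply: filterS h0 => w h _ /=; by rewrite ger0_norm.
Qed.

Lemma ae_le_integral2 {d} {T : measurableType d} {R : realType}
  {mu : {measure set T -> \bar R}} (f g : T -> R) :
  measurable_fun setT f -> measurable_fun setT g ->
  {ae mu, forall w, f w <= g w} -> {ae mu, forall w, 0 <= g w} ->
  (\int[mu]_w (f w)%:E <= \int[mu]_w (g w)%:E)%E.
Proof.
move=> mf mg hfg h0.
have mf' : measurable_fun [set: T] (EFin \o f) by exact/measurable_EFinP.
have mg' : measurable_fun [set: T] (EFin \o g) by exact/measurable_EFinP.
rewrite integralE.
apply: (@le_trans _ _ (\int[mu]_w ((EFin \o f)^\+ w))%E).
  rewrite -[X in (_ <= X)%E]sube0; apply: leeB => //.
  by apply: integral_ge0 => w _; exact: funeneg_ge0.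
rewrite (ae_eq_integral (fun w => `|(g w)%:E|)%E (fun w => (g w)%:E)) //; last first.
  apply: filterS h0 => w h _ /=; by rewrite ger0_norm.
  exact: measurableT_comp.
apply: ae_ge0_le_integral => //.
- exact: measurable_realfun.measurable_funepos.
- exact: measurableT_comp.
apply: filterS2 hfg h0 => w h1 h2 _ /=.
rewrite funeposE /= ger0_norm // ge_max !lee_fin h1 h2.
by [].
Qed.

Lemma condexp_integrable {d} {T : measurableType d} {R : realType}
  {mu : {measure set T -> \bar R}} (Fk : set_system T) (Y Z : T -> R) :
  Fk `<=` measurable -> sub_measurable Fk Z -> mu.-integrable setT (EFin \o Y) ->
  (forall A, Fk A -> (\int[mu]_(w in A) (Z w)%:E = \int[mu]_(w in A) (Y w)%:E)%E) ->
  mu.-integrable setT (EFin \o Z).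
Proof.
move=> sF hZ iY hA.
have mZ := sub_meas_meas sF hZ.
have mZ' : measurable_fun [set: T] (EFin \o Z) by exact/measurable_EFinP.
have mY' : measurable_fun [set: T] (EFin \o Y) := measurable_int _ iY.
have mY'' : measurable_fun [set: T] (fun w => `|(Y w)%:E|%E) by exact: measurableT_comp.
have mZ'' : measurable_fun [set: T] (fun w => `|(Z w)%:E|%E) by exact: measurableT_comp.
case/integrableP: iY => _ Yfin.
pose A := [set w | 0 <= Z w]; pose B := [set w | Z w < 0].
have FA : Fk A.
  have -> : A = Z @^-1` [set` Interval (BLeft (0:R)) (BInfty _ false)].
    by apply/seteqP; split => w /=; rewrite in_itv /= andbT.
  exact: hZ _ (measurable_itv _).
have FB : Fk B.
  have -> : B = Z @^-1` [set` Interval (BInfty _ true) (BLeft (0:R))].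
    by apply/seteqP; split => w /=; rewrite in_itv /=.
  exact: hZ _ (measurable_itv _).
have mA := sF _ FA; have mB := sF _ FB.
have AB : [set: T] = A `|` B.
  apply/seteqP; split => w // _; rewrite /A /B /=.
  by case: (leP 0 (Z w)) => h; [left|right].
have dAB : [disjoint A & B].
  rewrite /disj_set; apply/eqP/seteqP; split => w //= [h1 h2].
  by move: (le_lt_trans h1 h2); rewrite ltxx.
have YA (E : set T) : measurable E -> (\int[mu]_(w in E) `|(Y w)%:E| < +oo)%E.
  move=> mE; apply: le_lt_trans Yfin.
  apply: ge0_subset_integral => //.
apply/integrableP; split => //.
rewrite AB integral_setU //; last by rewrite -AB.
apply: lte_add_pinfty.
- rewrite (@eq_integral _ _ _ _ A (fun w => (Z w)%:E)); last first.
    by move=> w /[1!inE] h /=; rewrite ger0_norm.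
  rewrite hA //.
  apply: le_lt_trans (YA _ mA).
  apply: le_trans (lee_abs _) _.
  apply: le_abse_integral => //; exact: measurable_funS mY'.
- rewrite (@eq_integral _ _ _ _ B (fun w => - (Z w)%:E)%E); last first.
    by move=> w /[1!inE] h /=; rewrite ltr0_norm // EFinN.
  rewrite integralN; last first.
    rewrite (@integral0_eq _ _ _ _ B (EFin \o Z)^\+%E) ?fin_num_adde_defr //.
    move=> w Bw; rewrite funeposE /=; apply/max_idPr; rewrite lee_fin.
    exact: ltW.
  rewrite hA //.
  apply: le_lt_trans (YA _ mB).
  apply: le_trans (lee_abs _) _; rewrite abseN.
  apply: le_abse_integral => //; exact: measurable_funS mY'.
Qed.

Lemma pullout_ge0 {d} {T : measurableType d} {R : realType}
  {mu : {measure set T -> \bar R}} (Fk : set_system T) (W Dv : T -> R) :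
  Fk `<=` measurable -> mu.-integrable setT (EFin \o W) ->
  (forall A, Fk A -> (\int[mu]_(w in A) (W w)%:E = 0)%E) ->
  sub_measurable Fk Dv -> (forall w, 0 <= Dv w) ->
  mu.-integrable setT (EFin \o (fun w => W w * Dv w)) ->
  (\int[mu]_w (W w * Dv w)%:E = 0)%E.
Proof.
move=> sF iW hW hD D0 iWD.
have mD := sub_meas_meas sF hD.
have mW' : measurable_fun [set: T] (EFin \o W) := measurable_int _ iW.
have mW : measurable_fun [set: T] W by exact/measurable_EFinP.
have mWa : measurable_fun [set: T] (fun w => `|(W w)%:E|%E) by exact: measurableT_comp.
have Ifin := integrable_fin_num measurableT iWD.
have Mfin := integrable_fin_num measurableT (integrable_abse iW).
have M0 : (0 <= \int[mu]_w `|(W w)%:E|)%E by apply: integral_ge0 => w _; exact: abse_ge0.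
have key : forall δ : R, 0 < δ ->
    (`|\int[mu]_w (W w * Dv w)%:E| <= δ%:E * \int[mu]_w `|(W w)%:E|)%E.
  move=> δ δ0.
  pose q w := δ * (Num.truncn (Dv w / δ))%:R.
  have q0 w : 0 <= q w by rewrite mulr_ge0 // ltW.
  have qD w : q w <= Dv w.
    have h : (Num.truncn (Dv w / δ))%:R <= Dv w / δ.
      by rewrite truncn_le divr_ge0 // ltW.
    by rewrite /q mulrC -ler_pdivlMr.
  have Dq w : Dv w < q w + δ.
    have h := truncnS_gt (Dv w / δ).
    rewrite ltr_pdivrMr // in h.
    rewrite -natr1 mulrDl mul1r in h.
    by rewrite /q mulrC.
  pose G n := [set w | Num.truncn (Dv w / δ) = n].
  have GE n : G n = Dv @^-1` [set` Interval (BLeft (n%:R * δ)) (BLeft (n.+1%:R * δ))].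
    apply/seteqP; split => w /=; rewrite in_itv /=.
    - move=> <-; apply/andP; split.
        by have := qD w; rewrite /q mulrC.
      by have := Dq w; rewrite /q mulrC -natr1 mulrDl mul1r.
    - move=> /andP[h1 h2]; apply: truncn_def; apply/andP; split.
        by rewrite ler_pdivlMr.
      by rewrite ltr_pdivrMr.
  have FG n : Fk (G n) by rewrite GE; exact: hD _ (measurable_itv _).
  have mG n : measurable (G n) := sF _ (FG n).
  have GT : [set: T] = \bigcup_n G n.
    by apply/seteqP; split => w // _; exists (Num.truncn (Dv w / δ)).
  have tG : trivIset setT G.
    by move=> i j _ _ [w [Hi Hj]]; rewrite -Hi -Hj.
  have mq : measurable_fun [set: T] q.
    move=> _ B mB; rewrite setTI.
    have -> : q @^-1` B = \bigcup_(n in [set n | B (δ * n%:R)]) G n.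
      apply/seteqP; split => w /=.
      - by move=> Bq; exists (Num.truncn (Dv w / δ)).
      - by move=> [n /= Bn Gn]; rewrite /q Gn.
    by apply: bigcup_measurable => n _; exact: mG.
  have mWq : measurable_fun [set: T] (fun w => W w * q w) by exact: measurable_funM.
  have iWq : mu.-integrable setT (EFin \o (fun w => W w * q w)).
    apply: le_integrable iWD => //.
      exact/measurable_EFinP.
    move=> w _ /=; rewrite lee_fin (normrM (W w) (q w)) (normrM (W w)) ler_wpM2l //.
    by rewrite (ger0_norm (q0 w)) (ger0_norm (D0 w)) qD.
  have Wq0 : (\int[mu]_w (W w * q w)%:E = 0)%E.
    rewrite GT integral_bigcup //; last by rewrite -GT.
    apply: eseries0 => n _ _.
    rewrite (@eq_integral _ _ _ _ (G n) (fun w => ((δ * n%:R)%:E * (W w)%:E)%E)); last first.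
      by move=> w /[1!inE] Gw; rewrite /q Gw -EFinM mulrC.
    rewrite integralZl //; last exact: integrableS iW.
    by rewrite hW ?mule0.
  have E : (\int[mu]_w ((W w * Dv w - W w * q w)%:E) = \int[mu]_w (W w * Dv w)%:E)%E.
    rewrite (@eq_integral _ _ _ _ setT (fun w => ((W w * Dv w)%:E - (W w * q w)%:E)%E)); last first.
      by move=> w _; rewrite EFinB.
    by rewrite integralB_EFin // Wq0 sube0.
  rewrite -E.
  apply: le_trans (le_abse_integral _ _ _) _ => //.
    apply/measurable_EFinP; apply: measurable_funB => //; exact: measurable_funM.
  have dE : (0 <= δ%:E)%E by rewrite lee_fin ltW.
  rewrite -ge0_integralZl //.
  apply: ge0_le_integral => //.
  - apply: measurableT_comp => //; apply/measurable_EFinP; apply: measurable_funB => //.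
    exact: measurable_funM.
  - apply: emeasurable_funM => //.
  - move=> w _ /=; rewrite lee_fin -mulrBr normrM mulrC ler_wpM2r //.
    rewrite ger0_norm ?subr_ge0 //.
    by have := Dq w; rewrite -ltrBlDl => /ltW.
have Ifin' : (\int[mu]_w (W w * Dv w)%:E)%E \is a fin_num := Ifin.
suff hc : fine (\int[mu]_w (W w * Dv w)%:E)%E = 0 by rewrite -(fineK Ifin') hc.
set c := fine _.
set m := fine (\int[mu]_w `|(W w)%:E|)%E.
have Mfin' : (\int[mu]_w `|(W w)%:E|)%E \is a fin_num := Mfin.
have m0 : (0:R) <= m by apply: fine_ge0.
have key' δ : 0 < δ -> `|c| <= δ * m.
  move=> δ0; have := key δ δ0; rewrite -(fineK Ifin') -(fineK Mfin') /=.
  by rewrite -EFinM lee_fin.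
apply/eqP; apply/negPn/negP => cn0.
have t0 : 0 < `|c| by rewrite normr_gt0.
pose δ := `|c| / (2 * (m + 1)).
have hpos : 0 < 2 * (m + 1) by apply: mulr_gt0; lra.
have δ0 : 0 < δ by rewrite divr_gt0.
have h := key' δ δ0.
have hδ : δ * (2 * (m + 1)) = `|c| by rewrite /δ divfK // gt_eqF.
set t := `|c| in t0 h hδ.
clear -t0 h hδ m0 hpos.
nra.
Qed.

Lemma maxr_split {R : realType} (x : R) : x = Num.max x 0 - Num.max (- x) 0.
Proof.
rewrite !maxEle; case: (leP x 0) => h; case: (leP (- x) 0) => h'; lra.
Qed.

Lemma maxr_abs {R : realType} (x : R) : `|Num.max x 0| <= `|x|.
Proof.
rewrite maxEle; case: (leP x 0) => h; last by [].
by rewrite normr0.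
Qed.

Lemma pullout {d} {T : measurableType d} {R : realType}
  {mu : {measure set T -> \bar R}} (Fk : set_system T) (W Dv : T -> R) :
  Fk `<=` measurable -> mu.-integrable setT (EFin \o W) ->
  (forall A, Fk A -> (\int[mu]_(w in A) (W w)%:E = 0)%E) ->
  sub_measurable Fk Dv ->
  mu.-integrable setT (EFin \o (fun w => W w * Dv w)) ->
  (\int[mu]_w (W w * Dv w)%:E = 0)%E.
Proof.
move=> sF iW hW hD iWD.
have mW' : measurable_fun [set: T] (EFin \o W) := measurable_int _ iW.
have mW : measurable_fun [set: T] W by exact/measurable_EFinP.
have mmax : measurable_fun [set: R] (fun r : R => Num.max r 0).
  exact: measurable_maxr.
have mopp : measurable_fun [set: R] (fun r : R => Num.max (- r) 0).
  apply: measurable_maxr => //; exact: measurableT_comp.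
have hp : sub_measurable Fk (fun w => Num.max (Dv w) 0).
  move=> B mB; exact: (sub_meas_comp hD mmax B mB).
have hm : sub_measurable Fk (fun w => Num.max (- Dv w) 0).
  move=> B mB; exact: (sub_meas_comp hD mopp B mB).
have ip : mu.-integrable setT (EFin \o (fun w => W w * Num.max (Dv w) 0)).
  apply: le_integrable iWD => //.
    apply/measurable_EFinP; apply: measurable_funM => //; exact: sub_meas_meas hp.
  move=> w _ /=; rewrite lee_fin !normrM ler_wpM2l //; exact: maxr_abs.
have im : mu.-integrable setT (EFin \o (fun w => W w * Num.max (- Dv w) 0)).
  apply: le_integrable iWD => //.
    apply/measurable_EFinP; apply: measurable_funM => //; exact: sub_meas_meas hm.
  move=> w _ /=; rewrite lee_fin !normrM ler_wpM2l //.
  by rewrite -(normrN (Dv w)); exact: maxr_abs.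
rewrite (@eq_integral _ _ _ _ setT (fun w => ((W w * Num.max (Dv w) 0)%:E
   - (W w * Num.max (- Dv w) 0)%:E)%E)); last first.
  by move=> w _; rewrite -EFinB -mulrBr -maxr_split.
rewrite integralB_EFin //.
rewrite (pullout_ge0 _ _ _ sF iW hW hp) //; last by move=> w; rewrite le_max lexx orbT.
rewrite (pullout_ge0 _ _ _ sF iW hW hm) //; last by move=> w; rewrite le_max lexx orbT.
by rewrite subee.
Qed.


Lemma meas_dotv {d} {T : measurableType d} {R : realType} {n : nat}
  (u v : T -> 'rV[R]_n) :
  (forall j, measurable_fun setT (fun w => u w 0 j)) ->
  (forall j, measurable_fun setT (fun w => v w 0 j)) ->
  measurable_fun setT (fun w => dotv (u w) (v w)).
Proof.
move=> mu mv; rewrite /dotv; apply: measurable_sum => i.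
exact: measurable_funM.
Qed.

Lemma meas_normv {d} {T : measurableType d} {R : realType} {n : nat}
  (u : T -> 'rV[R]_n) :
  (forall j, measurable_fun setT (fun w => u w 0 j)) ->
  measurable_fun setT (fun w => normv (u w)).
Proof.
move=> mu; rewrite /normv.
apply: (measurableT_comp (continuous_measurable_fun (@sqrt_continuous R))).
exact: meas_dotv.
Qed.

Lemma meas_coordB {d} {T : measurableType d} {R : realType} {n : nat}
  (u v : T -> 'rV[R]_n) :
  (forall j, measurable_fun setT (fun w => u w 0 j)) ->
  (forall j, measurable_fun setT (fun w => v w 0 j)) ->
  forall j, measurable_fun setT (fun w => (u w - v w) 0 j).
Proof.
move=> mu mv j.
have -> : (fun w => (u w - v w) 0 j) = (fun w => u w 0 j - v w 0 j).
  by apply/funext => w; rewrite !mxE.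
exact: measurable_funB.
Qed.

Lemma integrable_lin {d} {T : measurableType d} {R : realType}
  {mu : {measure set T -> \bar R}} (f g : T -> R) (a b : R) :
  mu.-integrable setT (EFin \o f) -> mu.-integrable setT (EFin \o g) ->
  mu.-integrable setT (EFin \o (fun w => a * f w + b * g w)).
Proof.
move=> iF iG.
have := integrableD measurableT (integrableZl measurableT a iF) (integrableZl measurableT b iG).
apply: eq_integrable => // w _ /=; by rewrite EFinD !EFinM.
Qed.

Lemma abs_prod_le {R : realType} (x y : R) : `|x * y| <= 2^-1 * (x ^+ 2 + y ^+ 2).
Proof.
have h := sqr_ge0 (`|x| - `|y|).
rewrite normrM.
have hx : `|x| ^+ 2 = x ^+ 2 by rewrite real_normK // num_real.
have hy : `|y| ^+ 2 = y ^+ 2 by rewrite real_normK // num_real.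
nra.
Qed.

Lemma int_lin2_ge0 {d} {T : measurableType d} {R : realType}
  {mu : {measure set T -> \bar R}} (f g : T -> R) (a b : R) :
  0 <= a -> 0 <= b -> measurable_fun setT f -> measurable_fun setT g ->
  (forall w, 0 <= f w) -> (forall w, 0 <= g w) ->
  (\int[mu]_w (a * f w + b * g w)%:E =
   a%:E * \int[mu]_w (f w)%:E + b%:E * \int[mu]_w (g w)%:E)%E.
Proof.
move=> a0 b0 mf mg f0 g0.
have mf' : measurable_fun [set: T] (EFin \o f) by exact/measurable_EFinP.
have mg' : measurable_fun [set: T] (EFin \o g) by exact/measurable_EFinP.
rewrite (@eq_integral _ _ _ _ setT (fun w => (a%:E * (f w)%:E) + (b%:E * (g w)%:E))%E); last first.
  by move=> w _; rewrite EFinD !EFinM.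
rewrite ge0_integralD //.
- rewrite ge0_integralZl // ?lee_fin //; last by move=> w _; rewrite lee_fin.
  rewrite ge0_integralZl // ?lee_fin //; by move=> w _; rewrite lee_fin.
- by move=> w _; rewrite -EFinM lee_fin mulr_ge0.
- exact: emeasurable_funM.
- by move=> w _; rewrite -EFinM lee_fin mulr_ge0.
- exact: emeasurable_funM.
Qed.

Lemma int_add {d} {T : measurableType d} {R : realType}
  {mu : {measure set T -> \bar R}} (f g : T -> R) :
  mu.-integrable setT (EFin \o f) -> mu.-integrable setT (EFin \o g) ->
  (\int[mu]_w (f w + g w)%:E = \int[mu]_w (f w)%:E + \int[mu]_w (g w)%:E)%E.
Proof.
move=> iF iG.
transitivity (\int[mu]_w ((EFin \o f) \+ (EFin \o g)) w)%E.
  by apply: eq_integral => w _; rewrite /= EFinD.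
exact: integralD_EFin.
Qed.

Lemma int_scale {d} {T : measurableType d} {R : realType}
  {mu : {measure set T -> \bar R}} (f : T -> R) (a : R) :
  mu.-integrable setT (EFin \o f) ->
  (\int[mu]_w (a * f w)%:E = a%:E * \int[mu]_w (f w)%:E)%E.
Proof.
move=> iF.
transitivity (\int[mu]_w (a%:E * (EFin \o f) w))%E.
  by apply: eq_integral => w _; rewrite /= EFinM.
exact: integralZl.
Qed.

Lemma integrable_scale {d} {T : measurableType d} {R : realType}
  {mu : {measure set T -> \bar R}} (f : T -> R) (a : R) :
  mu.-integrable setT (EFin \o f) ->
  mu.-integrable setT (EFin \o (fun w => a * f w)).
Proof.
move=> iF; apply: eq_integrable (integrableZl measurableT a iF) => //.
Qed.

Lemma int_lin3 {d} {T : measurableType d} {R : realType}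
  {mu : {measure set T -> \bar R}} (f g h : T -> R) (a b c : R) :
  mu.-integrable setT (EFin \o f) -> mu.-integrable setT (EFin \o g) ->
  mu.-integrable setT (EFin \o h) ->
  (\int[mu]_w (a * f w + b * g w + c * h w)%:E =
   a%:E * \int[mu]_w (f w)%:E + b%:E * \int[mu]_w (g w)%:E
   + c%:E * \int[mu]_w (h w)%:E)%E.
Proof.
move=> iF iG iH.
have i12 := integrable_lin f g a b iF iG.
rewrite (int_add _ _ i12 (integrable_scale h c iH)).
rewrite (int_add _ _ (integrable_scale f a iF) (integrable_scale g b iG)).
by rewrite !int_scale.
Qed.

Lemma condexp_le {d} {T : measurableType d} {R : realType}
  {mu : {measure set T -> \bar R}} (Fk : set_system T) (Y Z V : T -> R) :
  Fk setT -> Fk `<=` measurable -> sub_measurable Fk Z ->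
  (forall A, Fk A -> (\int[mu]_(w in A) (Z w)%:E = \int[mu]_(w in A) (Y w)%:E)%E) ->
  measurable_fun setT V -> {ae mu, forall w, Z w <= V w} -> (forall w, 0 <= V w) ->
  (\int[mu]_w (Y w)%:E <= \int[mu]_w (V w)%:E)%E.
Proof.
move=> FT sF hZ hA mV hae V0.
rewrite -(hA _ FT).
apply: ae_le_integral2 => //.
- exact: sub_meas_meas hZ.
- exact: aeW.
Qed.


Lemma cross_bound {d} {T : measurableType d} {R : realType}
  {mu : {measure set T -> \bar R}} {n : nat} (Fk : set_system T)
  (Jt Jx Zb Dv : T -> 'rV[R]_n) (eb : T -> R) :
  Fk `<=` measurable ->
  (forall j, mu.-integrable setT (EFin \o (fun w => Jt w 0 j))) ->
  (forall j, measurable_fun setT (fun w => Jx w 0 j)) ->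
  (forall j, sub_measurable Fk (fun w => Zb w 0 j)) ->
  (forall j A, Fk A ->
     (\int[mu]_(w in A) (Zb w 0 j)%:E = \int[mu]_(w in A) (Jt w 0 j)%:E)%E) ->
  (forall j, sub_measurable Fk (fun w => Dv w 0 j)) ->
  measurable_fun setT eb ->
  {ae mu, forall w, normv (Zb w - Jx w) <= eb w} ->
  mu.-integrable setT (EFin \o (fun w => dotv (Jt w - Jx w) (Jt w - Jx w))) ->
  mu.-integrable setT (EFin \o (fun w => dotv (Dv w) (Dv w))) ->
  (\int[mu]_w (normv (Dv w) * eb w)%:E < +oo)%E ->
  (\int[mu]_w (dotv (Jt w - Jx w) (Dv w))%:E
     <= \int[mu]_w (normv (Dv w) * eb w)%:E)%E.
Proof.
move=> sF iJt mJx hZ hZA hD meb hae ie iD fin.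
have mJt j : measurable_fun setT (fun w => Jt w 0 j).
  exact/measurable_EFinP/(measurable_int _ (iJt j)).
have mZ j : measurable_fun setT (fun w => Zb w 0 j) := sub_meas_meas sF (hZ j).
have mD j : measurable_fun setT (fun w => Dv w 0 j) := sub_meas_meas sF (hD j).
have me := meas_coordB Jt Jx mJt mJx.
have mzx := meas_coordB Zb Jx mZ mJx.
have mnD := meas_normv Dv mD.
have mg : measurable_fun setT (fun w => normv (Dv w) * eb w) by exact: measurable_funM.
have g0 : {ae mu, forall w, 0 <= normv (Dv w) * eb w}.
  apply: filterS hae => w h; apply: mulr_ge0; first exact: normv_ge0.
  exact: le_trans (normv_ge0 _) h.
have ig := ae_ge0_integrable _ mg g0 fin.
have iZ j : mu.-integrable setT (EFin \o (fun w => Zb w 0 j)).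
  exact: condexp_integrable _ _ _ sF (hZ j) (iJt j) (hZA j).
have ieD j : mu.-integrable setT (EFin \o (fun w => (Jt w - Jx w) 0 j * Dv w 0 j)).
  apply: le_integrable (integrable_lin _ _ (2^-1) (2^-1) ie iD) => //.
    apply/measurable_EFinP; exact: measurable_funM.
  move=> w _ /=; rewrite lee_fin.
  apply: le_trans (abs_prod_le _ _) _.
  have h1 := coord_sq (Jt w - Jx w) j; have h2 := coord_sq (Dv w) j.
  have h3 := dotv_ge0 (Jt w - Jx w); have h4 := dotv_ge0 (Dv w).
  rewrite ger0_norm; lra.
have izD j : mu.-integrable setT (EFin \o (fun w => (Zb w - Jx w) 0 j * Dv w 0 j)).
  apply: (ae_le_integrable _ _ _ ig).
    exact: measurable_funM.
  apply: filterS hae => w h.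
  rewrite normrM.
  apply: le_trans (ler_pM _ _ (coord_le _ j) (coord_le _ j)) _ => //.
  by rewrite mulrC ler_wpM2l // normv_ge0.
have coord j : (\int[mu]_w ((Jt w - Jx w) 0 j * Dv w 0 j)%:E
    = \int[mu]_w ((Zb w - Jx w) 0 j * Dv w 0 j)%:E)%E.
  pose W w := Jt w 0 j - Zb w 0 j.
  have iW : mu.-integrable setT (EFin \o W).
    apply: eq_integrable (integrable_lin _ _ 1 (-1) (iJt j) (iZ j)) => // w _ /=.
    by rewrite mul1r mulN1r.
  have hW A : Fk A -> (\int[mu]_(w in A) (W w)%:E = 0)%E.
    move=> FA; have mA := sF _ FA.
    have i1 : mu.-integrable A (EFin \o (fun w => Jt w 0 j)).
      exact: integrableS (iJt j).
    have i2 : mu.-integrable A (EFin \o (fun w => Zb w 0 j)).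
      exact: integrableS (iZ j).
    rewrite (@eq_integral _ _ _ _ A (fun w => ((Jt w 0 j)%:E - (Zb w 0 j)%:E)%E)); last first.
      by move=> w _; rewrite /W EFinB.
    rewrite integralB_EFin // (hZA j A FA) subee //.
    exact: integrable_fin_num i1.
  have iWD : mu.-integrable setT (EFin \o (fun w => W w * Dv w 0 j)).
    apply: eq_integrable (integrable_lin _ _ 1 (-1) (ieD j) (izD j)) => // w _ /=.
    rewrite /W !mxE; congr EFin; ring.
  have := pullout Fk W (fun w => Dv w 0 j) sF iW hW (hD j) iWD.
  have -> : (\int[mu]_w ((Jt w - Jx w) 0 j * Dv w 0 j)%:E
      = \int[mu]_w (W w * Dv w 0 j + (Zb w - Jx w) 0 j * Dv w 0 j)%:E)%E.
    by apply: eq_integral => w _; rewrite /W !mxE; congr EFin; ring.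
  by rewrite int_add // => ->; rewrite add0e.
rewrite (@eq_integral _ _ _ _ setT (fun w => \sum_(j < n) ((Jt w - Jx w) 0 j * Dv w 0 j)%:E)%E); last first.
  by move=> w _; rewrite sumEFin.
rewrite integral_sum //.
under eq_bigr do rewrite coord.
rewrite -integral_sum //.
rewrite (@eq_integral _ _ _ _ setT (fun w => (dotv (Zb w - Jx w) (Dv w))%:E)); last first.
  by move=> w _; rewrite sumEFin.
apply: ae_le_integral2 => //.
  exact: meas_dotv.
apply: filterS hae => w h; apply: le_trans (CS _ _) _.
by rewrite mulrC ler_wpM2l // normv_ge0.
Qed.


Lemma sum_pinfty {R : realType} (K k : nat) (f : nat -> \bar R) :
  (k < K)%N -> (forall i, (0 <= f i)%E) -> f k = +oo%E ->
  (\sum_(i < K) f i = +oo)%E.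
Proof.
move=> hk f0 fk; apply/eqP; rewrite eq_le leey /=.
rewrite -fk (bigD1 (Ordinal hk)) //=.
apply: leeDl; apply: sume_ge0 => i _; exact: f0.
Qed.

Theorem lemmaC8 (R : realType) (d : nat)
  (F : 'rV[R]_d -> 'rV[R]_d) (G : setop R d) (L rho eta : R)
  (xstar : 'rV[R]_d) (J : 'rV[R]_d -> 'rV[R]_d)
  (dd : measure_display) (T : measurableType dd) (P : probability T R)
  (x0 : 'rV[R]_d) (x : nat -> T -> 'rV[R]_d) (Jt : nat -> T -> 'rV[R]_d)
  (eps_v eps_b : nat -> T -> R) (K : nat) :
  lipschitz_with L F ->
  maximally_monotone G ->
  (exists z, add_op F G z 0) ->
  add_op F G xstar 0 ->
  (forall z u, add_op F G z u -> dotv u (z - xstar) >= - rho * dotv u u) ->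
  0 < rho -> rho < eta ->
  (* J is the resolvent J_{eta(F+G)} *)
  (forall z, resolvent_at eta (add_op F G) z (J z)) ->
  let alpha := 1 - rho / eta in
  let alpha_k := fun k : nat =>
    alpha / (Num.sqrt (k%:R + 2) * ln (k%:R + 3)) in
  (* iterates *)
  (forall w, x 0%N w = x0) ->
  (forall k w, x k.+1 w = (1 - alpha_k k) *: x k w + alpha_k k *: Jt k w) ->
  (* measurability / integrability making the expectations meaningful *)
  (forall k j, P.-integrable setT (fun w => (Jt k w 0 j)%:E)) ->
  (forall k j, measurable_fun setT (fun w => J (x k w) 0 j)) ->
  (* eps_{k,v}, eps_{k,b} are measurable w.r.t. sigma(x_0, ..., x_k) *)
  (forall k, sub_measurable (past_sigma x k) (eps_v k)) ->
  (forall k, sub_measurable (past_sigma x k) (eps_b k)) ->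
  (* E_k || Jt_k - J(x_k) ||^2 <= eps_{k,v}^2 *)
  (forall k, exists Z : T -> R,
     is_cond_exp P (past_sigma x k)
       (fun w => normv (Jt k w - J (x k w)) ^+ 2) Z /\
     {ae P, forall w, Z w <= eps_v k w ^+ 2}) ->
  (* || E_k [Jt_k] - J(x_k) || <= eps_{k,b} *)
  (forall k, exists Z : T -> 'rV[R]_d,
     (forall j, is_cond_exp P (past_sigma x k)
                  (fun w => Jt k w 0 j) (fun w => Z w 0 j)) /\
     {ae P, forall w, normv (Z w - J (x k w)) <= eps_b k w}) ->
  (\sum_(k < K) ((alpha / 4 * alpha_k k)%:E *
       \int[P]_w ((normv (x k w - J (x k w)) ^+ 2)%:E))
   <= (2^-1 * normv (x0 - xstar) ^+ 2)%:E
      + \sum_(k < K) ((3 / 2 * alpha_k k ^+ 2)%:E *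
            \int[P]_w ((eps_v k w ^+ 2)%:E))
      + \sum_(k < K) ((alpha_k k)%:E *
            \int[P]_w ((normv (x k w - xstar) * eps_b k w)%:E)))%E.
Proof.
move=> Lip Gmm Hex Hsol Hminty rho0 rhoeta HJ alpha alpha_k Hx0 Hx iJt mJ hev heb Hv Hb.
have eta0 : 0 < eta := lt_trans rho0 rhoeta.
have al0 : 0 < alpha by rewrite /alpha subr_gt0 ltr_pdivrMr // mul1r.
have akb k : 0 < alpha_k k /\ alpha_k k <= alpha := ak_bounds _ k al0.
have mJt k j : measurable_fun setT (fun w => Jt k w 0 j).
  exact/measurable_EFinP/(measurable_int _ (iJt k j)).
have mx k j : measurable_fun setT (fun w => x k w 0 j).
  elim: k j => [|k IH] j.
    have -> : (fun w => x 0%N w 0 j) = (fun _ => x0 0 j) by apply/funext => w; rewrite Hx0.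
    exact: measurable_cst.
  have -> : (fun w => x k.+1 w 0 j)
      = (fun w => (1 - alpha_k k) * x k w 0 j + alpha_k k * Jt k w 0 j).
    by apply/funext => w; rewrite Hx !mxE.
  by apply: measurable_funD; apply: measurable_funM => //; exact: measurable_cst.
have mxs : forall j, measurable_fun setT (fun _ : T => xstar 0 j).
  by move=> j; exact: measurable_cst.
have past_meas k : past_sigma x k `<=` measurable.
  apply: smallest_sub; first exact: sigma_algebra_measurable.
  move=> A [i [j [B [_ [mB ->]]]]].
  by have := mx i j measurableT B mB; rewrite setTI.
have pastT k : past_sigma x k setT.
  have [h0 hD _] := smallest_sigma_algebra setT (gen_sets x k).
  by rewrite -(setD0 setT); apply: hD.
have xsub k j : sub_measurable (past_sigma x k) (fun w => x k w 0 j).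
  by move=> B mB; apply: sub_sigma_algebra; exists k, j, B.
have Dsub k j : sub_measurable (past_sigma x k) (fun w => (x k w - xstar) 0 j).
  have mg : measurable_fun setT (fun r : R => r - xstar 0 j).
    by apply: measurable_funB => //; exact: measurable_cst.
  have -> : (fun w => (x k w - xstar) 0 j) = (fun r => r - xstar 0 j) \o (fun w => x k w 0 j).
    by apply/funext => w; rewrite /= !mxE.
  move=> B mB; exact: (sub_meas_comp (xsub k j) mg B mB).
have mD k := meas_coordB (x k) (fun _ => xstar) (mx k) mxs.
have mr k := meas_coordB (x k) (fun w => J (x k w)) (mx k) (mJ k).
have me k := meas_coordB (Jt k) (fun w => J (x k w)) (mJt k) (mJ k).
have mev k : measurable_fun setT (eps_v k) := sub_meas_meas (past_meas k) (hev k).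
have meb k : measurable_fun setT (eps_b k) := sub_meas_meas (past_meas k) (heb k).
have mnD k := meas_normv _ (mD k).
have mnr k := meas_normv _ (mr k).
have mne k := meas_normv _ (me k).
have step n :
  P.-integrable setT (EFin \o (fun w => normv (x n w - xstar) ^+ 2)) ->
  (\int[P]_w (eps_v n w ^+ 2)%:E < +oo)%E ->
  (\int[P]_w (normv (x n w - xstar) * eps_b n w)%:E < +oo)%E ->
  P.-integrable setT (EFin \o (fun w => normv (x n.+1 w - xstar) ^+ 2)) /\
  ((2^-1)%:E * \int[P]_w (normv (x n.+1 w - xstar) ^+ 2)%:E
    + (alpha / 4 * alpha_k n)%:E * \int[P]_w (normv (x n w - J (x n w)) ^+ 2)%:E
   <= (2^-1)%:E * \int[P]_w (normv (x n w - xstar) ^+ 2)%:E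
    + (3 / 2 * alpha_k n ^+ 2)%:E * \int[P]_w (eps_v n w ^+ 2)%:E
    + (alpha_k n)%:E * \int[P]_w (normv (x n w - xstar) * eps_b n w)%:E)%E.
  move=> iD finv finb.
  have [a0 aal] := akb n.
  set a := alpha_k n in a0 aal *.
  have Deq w : x n.+1 w - xstar
      = (x n w - xstar) - a *: ((x n w - J (x n w)) - (Jt n w - J (x n w))).
    by apply/rowP => j; rewrite Hx -/a !mxE; ring.
  have Hm w : alpha * dotv (x n w - J (x n w)) (x n w - J (x n w))
      <= dotv (x n w - J (x n w)) (x n w - xstar).
    exact: (minty_res F G eta rho xstar (x n w) (J (x n w)) eta0 (HJ _) Hminty).
  have [Zv [[hZv hZvA] hZvae]] := Hv n.
  have [Zb [hZb hZbae]] := Hb n.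
  have mev2 : measurable_fun setT (fun w => eps_v n w ^+ 2) by exact: measurable_funX.
  have hee : (\int[P]_w (normv (Jt n w - J (x n w)) ^+ 2)%:E
      <= \int[P]_w (eps_v n w ^+ 2)%:E)%E.
    exact: (condexp_le (past_sigma x n) _ Zv _ (pastT n) (past_meas n) hZv hZvA mev2 hZvae
      (fun w => sqr_ge0 _)).
  have mne2 : measurable_fun setT (fun w => normv (Jt n w - J (x n w)) ^+ 2).
    exact: measurable_funX (mne n).
  have mnD2 : measurable_fun setT (fun w => normv (x n w - xstar) ^+ 2).
    exact: measurable_funX (mnD n).
  have mnr2 : measurable_fun setT (fun w => normv (x n w - J (x n w)) ^+ 2).
    exact: measurable_funX (mnr n).
  have mnD12 : measurable_fun setT (fun w => normv (x n.+1 w - xstar) ^+ 2).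
    exact: measurable_funX (mnD n.+1).
  have ie : P.-integrable setT (EFin \o (fun w => normv (Jt n w - J (x n w)) ^+ 2)).
    apply: ae_ge0_integrable => //.
      by apply: aeW => w; exact: sqr_ge0.
    exact: le_lt_trans hee finv.
  have ie' : P.-integrable setT
      (EFin \o (fun w => dotv (Jt n w - J (x n w)) (Jt n w - J (x n w)))).
    by apply: eq_integrable ie => // w _ /=; rewrite normv2.
  have iD' : P.-integrable setT
      (EFin \o (fun w => dotv (x n w - xstar) (x n w - xstar))).
    by apply: eq_integrable iD => // w _ /=; rewrite normv2.
  have cb := cross_bound (past_sigma x n) (Jt n) (fun w => J (x n w)) Zb
     (fun w => x n w - xstar) (eps_b n)
     (past_meas n) (iJt n) (mJ n) (fun j => (hZb j).1) (fun j A FA => (hZb j).2 A FA)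
     (Dsub n) (meb n) hZbae ie' iD' finb.
  have mh : measurable_fun setT
      (fun w => dotv (Jt n w - J (x n w)) (x n w - xstar)).
    exact: meas_dotv (me n) (mD n).
  have ih : P.-integrable setT
      (EFin \o (fun w => dotv (Jt n w - J (x n w)) (x n w - xstar))).
    apply: le_integrable (integrable_lin _ _ (2^-1) (2^-1) ie' iD') => //.
      exact/measurable_EFinP.
    move=> w _ /=; rewrite lee_fin.
    apply: le_trans (dot_abs_le _ _) _.
    have h3 := dotv_ge0 (Jt n w - J (x n w)); have h4 := dotv_ge0 (x n w - xstar).
    rewrite ger0_norm; lra.
  split.
    apply: le_integrable (integrable_lin _ _ (1 + a) (3 * a ^+ 2 + a) iD ie) => //.
      exact/measurable_EFinP.
    move=> w _ /=; rewrite lee_fin.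
    have h1 := sqr_ge0 (normv (x n w - xstar)).
    have h2 := sqr_ge0 (normv (Jt n w - J (x n w))).
    have h5 : 0 <= 3 * a ^+ 2 + a by have := sqr_ge0 a; lra.
    rewrite ger0_norm ?sqr_ge0 // ger0_norm; last first.
      by apply: addr_ge0; apply: mulr_ge0 => //; lra.
    rewrite !normv2 Deq.
    exact: step_bound _ _ _ _ _ a0 aal (Hm w).
  have c1 : 0 <= alpha / 4 * a by apply: mulr_ge0; [apply: divr_ge0 => //; lra | lra].
  apply: (@le_trans _ _ (\int[P]_w (2^-1 * normv (x n w - xstar) ^+ 2
      + 3 / 2 * a ^+ 2 * normv (Jt n w - J (x n w)) ^+ 2
      + a * dotv (Jt n w - J (x n w)) (x n w - xstar))%:E)%E).
    rewrite -(int_lin2_ge0 (fun w => normv (x n.+1 w - xstar) ^+ 2)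
       (fun w => normv (x n w - J (x n w)) ^+ 2)) //; last 2 first.
    - by move=> w; exact: sqr_ge0.
    - by move=> w; exact: sqr_ge0.
    apply: ge0_le_integral => //.
    - move=> w _; rewrite lee_fin; apply: addr_ge0; apply: mulr_ge0 => //;
        rewrite ?invr_ge0 ?sqr_ge0 //.
    - apply/measurable_EFinP; apply: measurable_funD; apply: measurable_funM => //;
        exact: measurable_cst.
    - apply/measurable_EFinP; apply: measurable_funD; [apply: measurable_funD|];
        apply: measurable_funM => //; exact: measurable_cst.
    move=> w _; rewrite lee_fin !normv2 Deq.
    exact: step_pt _ _ _ _ _ a0 aal (Hm w).
  rewrite (int_lin3 (fun w => normv (x n w - xstar) ^+ 2)
    (fun w => normv (Jt n w - J (x n w)) ^+ 2)
    (fun w => dotv (Jt n w - J (x n w)) (x n w - xstar))) //.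
  apply: leeD; first apply: leeD => //.
    by apply: lee_wpmul2l => //; rewrite lee_fin; apply: mulr_ge0 => //; rewrite ?sqr_ge0 //; lra.
  by apply: lee_wpmul2l => //; rewrite lee_fin ltW.
have c32 : (0:R) <= 3 / 2 by [].
have Vge0 k : (0 <= (3 / 2 * alpha_k k ^+ 2)%:E * \int[P]_w (eps_v k w ^+ 2)%:E)%E.
  apply: mule_ge0; first by rewrite lee_fin; apply: mulr_ge0 => //; exact: sqr_ge0.
  by apply: integral_ge0 => w _; rewrite lee_fin sqr_ge0.
have Bint0 k : (0 <= \int[P]_w (normv (x k w - xstar) * eps_b k w)%:E)%E.
  apply: ae_ge0_integral_ge0; first exact: measurable_funM (mnD k) (meb k).
  have [Zb [_ hae]] := Hb k.
  apply: filterS hae => w h.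
  exact: mulr_ge0 (normv_ge0 _) (le_trans (normv_ge0 _) h).
have Bge0 k : (0 <= (alpha_k k)%:E * \int[P]_w (normv (x k w - xstar) * eps_b k w)%:E)%E.
  by apply: mule_ge0 => //; rewrite lee_fin; exact: ltW (akb k).1.
have Lge0 k : (0 <= (alpha / 4 * alpha_k k)%:E * \int[P]_w ((normv (x k w - J (x k w)) ^+ 2)%:E))%E.
  apply: mule_ge0.
    rewrite lee_fin; apply: mulr_ge0; last exact: ltW (akb k).1.
    by apply: divr_ge0 => //; exact: ltW.
  by apply: integral_ge0 => w _; rewrite lee_fin sqr_ge0.
have SVge0 : (0 <= \sum_(k < K) ((3 / 2 * alpha_k k ^+ 2)%:E *
            \int[P]_w ((eps_v k w ^+ 2)%:E)))%E.
  by apply: sume_ge0 => k _; exact: Vge0.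
have SBge0 : (0 <= \sum_(k < K) ((alpha_k k)%:E *
            \int[P]_w ((normv (x k w - xstar) * eps_b k w)%:E)))%E.
  by apply: sume_ge0 => k _; exact: Bge0.
have [fin|nfin] := pselect (forall k, (k < K)%N ->
   (\int[P]_w (eps_v k w ^+ 2)%:E < +oo)%E /\
   (\int[P]_w (normv (x k w - xstar) * eps_b k w)%:E < +oo)%E); last first.
  have [k /not_implyP [hk hn]] : exists k, ~ ((k < K)%N ->
   (\int[P]_w (eps_v k w ^+ 2)%:E < +oo)%E /\
   (\int[P]_w (normv (x k w - xstar) * eps_b k w)%:E < +oo)%E).
    exact/existsNP.
  case: (ltP (\int[P]_w (eps_v k w ^+ 2)%:E)%E +oo%E) => hv.
    case: (ltP (\int[P]_w (normv (x k w - xstar) * eps_b k w)%:E)%E +oo%E) => hb.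
      by exfalso; apply: hn.
    have fk : ((alpha_k k)%:E * \int[P]_w (normv (x k w - xstar) * eps_b k w)%:E = +oo)%E.
      move: hb; rewrite leye_eq => /eqP ->; rewrite muleC gt0_mulye // lte_fin.
      exact: (akb k).1.
    have hS : (\sum_(k < K) ((alpha_k k)%:E *
            \int[P]_w ((normv (x k w - xstar) * eps_b k w)%:E)) = +oo)%E.
      exact: (sum_pinfty _ _ _ hk Bge0 fk).
    rewrite hS addey ?leey //.
    rewrite -ltNye; apply: (lt_le_trans ltNy0); apply: adde_ge0 => //.
    by rewrite lee_fin mulr_ge0 // sqr_ge0.
  have fk : ((3 / 2 * alpha_k k ^+ 2)%:E * \int[P]_w (eps_v k w ^+ 2)%:E = +oo)%E.
    move: hv; rewrite leye_eq => /eqP ->; rewrite muleC gt0_mulye // lte_fin.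
    by apply: mulr_gt0 => //; apply: exprn_gt0; exact: (akb k).1.
  have hS : (\sum_(k < K) ((3 / 2 * alpha_k k ^+ 2)%:E *
            \int[P]_w ((eps_v k w ^+ 2)%:E)) = +oo)%E.
    exact: (sum_pinfty _ _ _ hk Vge0 fk).
  rewrite hS addey ?addye ?leey //.
  rewrite -ltNye; exact: (lt_le_trans ltNy0).
have main n : (n <= K)%N ->
  P.-integrable setT (EFin \o (fun w => normv (x n w - xstar) ^+ 2)) /\
  ((2^-1)%:E * \int[P]_w (normv (x n w - xstar) ^+ 2)%:E
   + \sum_(k < n) ((alpha / 4 * alpha_k k)%:E *
       \int[P]_w ((normv (x k w - J (x k w)) ^+ 2)%:E))
   <= (2^-1 * normv (x0 - xstar) ^+ 2)%:E
      + \sum_(k < n) ((3 / 2 * alpha_k k ^+ 2)%:E *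
            \int[P]_w ((eps_v k w ^+ 2)%:E))
      + \sum_(k < n) ((alpha_k k)%:E *
            \int[P]_w ((normv (x k w - xstar) * eps_b k w)%:E)))%E.
  elim: n => [_|n IH hn].
    have e0 : forall w, normv (x 0%N w - xstar) ^+ 2 = normv (x0 - xstar) ^+ 2.
      by move=> w; rewrite Hx0.
    split.
      apply: eq_integrable (finite_measure_integrable_cst P (normv (x0 - xstar) ^+ 2) measurableT) => //.
      by move=> w _ /=; rewrite e0.
    rewrite !big_ord0 !adde0.
    rewrite (@eq_integral _ _ _ _ setT (fun _ => (normv (x0 - xstar) ^+ 2)%:E)); last first.
      by move=> w _; rewrite e0.
    have h1 : (P : {measure set T -> \bar R}) [set: T] = 1%E by exact: probability_setT.
    by rewrite integral_cst // h1 mule1 -EFinM.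
  have [IHi IHle] := IH (ltnW hn).
  have [fv fb] := fin n hn.
  have [i1 hs] := step n IHi fv fb.
  split => //.
  rewrite !big_ord_recr /=.
  set A1 := ((2^-1)%:E * _)%E.
  set A0 := ((2^-1)%:E * _)%E in IHle hs.
  set SL := \sum_(i < n) _ in IHle *.
  set SV := \sum_(i < n) _ in IHle *.
  set SB := \sum_(i < n) _ in IHle *.
  set Ln := ((alpha / 4 * alpha_k n)%:E * _)%E in hs *.
  set Vn := ((3 / 2 * alpha_k n ^+ 2)%:E * _)%E in hs *.
  set Bn := ((alpha_k n)%:E * _)%E in hs *.
  set c := (2^-1 * normv (x0 - xstar) ^+ 2)%:E in IHle *.
  rewrite addeCA.
  apply: le_trans (leeD (lexx SL) hs) _.
  have e2 : (SL + (A0 + Vn + Bn) = A0 + SL + Vn + Bn)%E.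
    by rewrite !addeA (addeC SL A0).
  rewrite e2.
  have e3 : (c + (SV + Vn) + (SB + Bn) = c + SV + SB + Vn + Bn)%E.
    by rewrite !addeA (addeAC (c + SV) Vn SB).
  rewrite e3.
  by apply: leeD => //; apply: leeD.
have [_ hK] := main K (leqnn K).
apply: le_trans hK.
apply: leeDr.
apply: mule_ge0; first by rewrite lee_fin invr_ge0.
by apply: integral_ge0 => w _; rewrite lee_fin sqr_ge0.
Qed.
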